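(* The distribution $p\in\Delta_7$ with $p_{001}=p_{010}=p_{100}=\tfrac13$ and all other entries $0$ lies in $\mathcal{M}_{3,3}$ and in the closure $\overline{\operatorname{RBM}_{3,2}}$, but not in $\operatorname{RBM}_{3,2}$. In particular $\operatorname{RBM}_{3,2}$ is not a closed subset of $\Delta_7$.
   Context: A distribution of three binary random variables is a $2\times2\times2$ tensor $p=(p_{ijk})_{i,j,k\in\{0,1\}}$ with nonnegative entries summing to $1$; the set of these is $\Delta_7$. For $a,b,c\in\mathbb{R}^2_{\ge0}$, $a\otimes b\otimes c$ is the tensor with entries $a_ib_jc_k$. $\mathcal{M}_{3,3}$ is the set of $p\in\Delta_7$ that are a sum of three tensors of the form $a\otimes b\otimes c$ with $a,b,c\in\mathbb{R}^2_{\ge0}$. $\operatorname{RBM}_{3,2}$ is the set of $p\in\Delta_7$ of the form $p=(a_1\otimes b_1\otimes c_1+d_1\otimes e_1\otimes f_1)*(a_2\otimes b_2\otimes c_2+d_2\otimes e_2\otimes f_2)$ with all vectors in $\mathbb{R}^2_{\ge0}$, where $*$ is the entrywise (Hadamard) product. *)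

(* Defs.v *)
From Stdlib Require Import Reals.
Open Scope R_scope.

(* Index set {0,1} is encoded by bool, with false = 0 and true = 1. *)
Definition vec2 := bool -> R.
Definition nonneg2 (a : vec2) : Prop := forall i, 0 <= a i.

Definition tensor := bool -> bool -> bool -> R.

Definition outer3 (a b c : vec2) : tensor := fun i j k => a i * b j * c k.

Definition tsum (p : tensor) : R :=
  p false false false + p false false true + p false true false + p false true true +
  p true false false + p true false true + p true true false + p true true true.

Definition Delta7 (p : tensor) : Prop :=
  (forall i j k, 0 <= p i j k) /\ tsum p = 1.

Definition M33 (p : tensor) : Prop :=
  Delta7 p /\
  exists a1 b1 c1 a2 b2 c2 a3 b3 c3 : vec2,
    nonneg2 a1 /\ nonneg2 b1 /\ nonneg2 c1 /\
    nonneg2 a2 /\ nonneg2 b2 /\ nonneg2 c2 /\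
    nonneg2 a3 /\ nonneg2 b3 /\ nonneg2 c3 /\
    forall i j k, p i j k = outer3 a1 b1 c1 i j k + outer3 a2 b2 c2 i j k
                            + outer3 a3 b3 c3 i j k.

Definition RBM32 (p : tensor) : Prop :=
  Delta7 p /\
  exists a1 b1 c1 d1 e1 f1 a2 b2 c2 d2 e2 f2 : vec2,
    nonneg2 a1 /\ nonneg2 b1 /\ nonneg2 c1 /\
    nonneg2 d1 /\ nonneg2 e1 /\ nonneg2 f1 /\
    nonneg2 a2 /\ nonneg2 b2 /\ nonneg2 c2 /\
    nonneg2 d2 /\ nonneg2 e2 /\ nonneg2 f2 /\
    forall i j k, p i j k =
      (outer3 a1 b1 c1 i j k + outer3 d1 e1 f1 i j k) *
      (outer3 a2 b2 c2 i j k + outer3 d2 e2 f2 i j k).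

(* Topological closure in R^8 (= R^{2x2x2}) with its standard topology,
   expressed via the (equivalent) sup-norm metric. *)
Definition closure (S : tensor -> Prop) (p : tensor) : Prop :=
  forall eps, 0 < eps ->
    exists q, S q /\ forall i j k, Rabs (p i j k - q i j k) < eps.

Definition is_closed (S : tensor -> Prop) : Prop :=
  forall p, closure S p -> S p.

Definition p_ex : tensor := fun i j k =>
  match i, j, k with
  | false, false, true => 1/3
  | false, true, false => 1/3
  | true, false, false => 1/3
  | _, _, _ => 0
  end.

(* Main.v *)
Require Import Defs.
From Stdlib Require Import Reals Lra Psatz.
Open Scope R_scope.

Definition v2 (x0 x1 : R) : vec2 := fun b => if b then x1 else x0.

Lemma v2_nn x0 x1 : 0 <= x0 -> 0 <= x1 -> nonneg2 (v2 x0 x1).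
Proof. intros; intros []; simpl; auto. Qed.

Lemma sum_pos u v : 0 <= u -> 0 <= v -> 0 < u + v -> 0 < u \/ 0 < v.
Proof. intros. destruct (Rle_lt_or_eq_dec 0 u H); [left; auto| right; subst; lra]. Qed.

Lemma prod3_pos x y z : 0<=x->0<=y->0<=z->0<x*y*z->0<x/\0<y/\0<z.
Proof.
  intros hx hy hz h.
  destruct (Rle_lt_or_eq_dec 0 x hx) as [?|ex]; [|subst; lra].
  destruct (Rle_lt_or_eq_dec 0 y hy) as [?|ey]; [|subst; lra].
  destruct (Rle_lt_or_eq_dec 0 z hz) as [?|ez]; [|subst; lra].
  auto.
Qed.

Lemma nn3 (a b c : vec2) i j k : nonneg2 a -> nonneg2 b -> nonneg2 c -> 0 <= a i * b j * c k.
Proof. intros. repeat apply Rmult_le_pos; auto. Qed.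

Lemma key (a b c d e f : vec2) : nonneg2 a -> nonneg2 b -> nonneg2 c ->
  nonneg2 d -> nonneg2 e -> nonneg2 f ->
  0 < a false*b false*c true + d false*e false*f true ->
  0 < a false*b true*c false + d false * e true * f false ->
  0 < a true*b false*c false + d true*e false*f false ->
  0 < a false*b false*c false + d false*e false*f false.
Proof.
  intros ha hb hc hd he hf h1 h2 h3.
  pose proof (nn3 a b c false false false ha hb hc).
  pose proof (nn3 d e f false false false hd he hf).
  apply sum_pos in h1; try apply nn3; auto.
  apply sum_pos in h2; try apply nn3; auto.
  apply sum_pos in h3; try apply nn3; auto.
  destruct h1 as [h1|h1]; apply prod3_pos in h1; auto;
  destruct h2 as [h2|h2]; apply prod3_pos in h2; auto;
  destruct h3 as [h3|h3]; apply prod3_pos in h3; auto;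
  decompose [and] h1; decompose [and] h2; decompose [and] h3;
  first [ apply Rplus_lt_le_0_compat; [repeat apply Rmult_lt_0_compat; assumption | assumption]
        | apply Rplus_le_lt_0_compat; [assumption | repeat apply Rmult_lt_0_compat; assumption] ].
Qed.

Lemma mul_pos_l x y : 0 <= x -> 0 <= y -> 0 < x * y -> 0 < x /\ 0 < y.
Proof.
  intros hx hy h.
  destruct (Rle_lt_or_eq_dec 0 x hx) as [?|ex]; [|subst; lra].
  destruct (Rle_lt_or_eq_dec 0 y hy) as [?|ey]; [|subst; lra].
  auto.
Qed.

Lemma notRBM : ~ RBM32 p_ex.
Proof.
  intros [_ [a1 [b1 [c1 [d1 [e1 [f1 [a2 [b2 [c2 [d2 [e2 [f2 H]]]]]]]]]]]]].
  destruct H as [ha1 [hb1 [hc1 [hd1 [he1 [hf1 [ha2 [hb2 [hc2 [hd2 [he2 [hf2 H]]]]]]]]]]]].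
  unfold outer3 in H.
  pose proof (H false false false) as H0.
  pose proof (H false false true) as H1.
  pose proof (H false true false) as H2.
  pose proof (H true false false) as H3.
  simpl in H0, H1, H2, H3.
  assert (G : forall i j k, 0 <= a1 i * b1 j * c1 k + d1 i * e1 j * f1 k /\
                           0 <= a2 i * b2 j * c2 k + d2 i * e2 j * f2 k).
  { intros; split; apply Rplus_le_le_0_compat; apply nn3; auto. }
  destruct (mul_pos_l _ _ (proj1 (G _ _ _)) (proj2 (G _ _ _)) (ltac:(rewrite <- H1; lra))) as [p1 q1].
  destruct (mul_pos_l _ _ (proj1 (G _ _ _)) (proj2 (G _ _ _)) (ltac:(rewrite <- H2; lra))) as [p2 q2].
  destruct (mul_pos_l _ _ (proj1 (G _ _ _)) (proj2 (G _ _ _)) (ltac:(rewrite <- H3; lra))) as [p3 q3].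
  pose proof (key _ _ _ _ _ _ ha1 hb1 hc1 hd1 he1 hf1 p1 p2 p3).
  pose proof (key _ _ _ _ _ _ ha2 hb2 hc2 hd2 he2 hf2 q1 q2 q3).
  assert (0 < (a1 false * b1 false * c1 false + d1 false * e1 false * f1 false) *
       (a2 false * b2 false * c2 false + d2 false * e2 false * f2 false)) by (apply Rmult_lt_0_compat; auto).
  lra.
Qed.

Lemma delta_p : Delta7 p_ex.
Proof. split. intros [] [] []; simpl; lra. unfold tsum; simpl; lra. Qed.

Lemma closure_p : closure RBM32 p_ex.
Proof.
  intros eps heps.
  set (N := 3 + 3*eps^2 + 4*eps).
  assert (hN : 0 < N) by (unfold N; nra).
  set (s := 1 / N).
  set (t := (1+eps^2) / (2*eps*N)).
  assert (hs : s * N = 1) by (unfold s; field; lra).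
  assert (ht : 2*t*eps = (1+eps^2)*s) by (unfold t, s; field; lra).
  assert (s0 : 0 < s) by (unfold s; apply Rdiv_lt_0_compat; lra).
  assert (t0 : 0 < t) by (unfold t; apply Rdiv_lt_0_compat; nra).
  assert (s3 : s*3 < 1) by (unfold N in hs; nra).
  assert (es : eps*s*3 < eps) by nra.
  assert (r : s*(1+eps^2)*3 = 1 - 4*eps*s) by (unfold N in hs; nra).
  clearbody s t.
  set (q := fun i j k =>
      (outer3 (v2 s 0) (v2 1 1) (v2 1 1) i j k + outer3 (v2 0 t) (v2 1 0) (v2 1 0) i j k) *
      (outer3 (v2 1 1) (v2 1 eps) (v2 eps 1) i j k + outer3 (v2 1 1) (v2 eps 1) (v2 1 eps) i j k)).
  exists q. split.
  - split.
    + split.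
      * intros [] [] []; unfold q, outer3; simpl; apply Rmult_le_pos; apply Rplus_le_le_0_compat; repeat apply Rmult_le_pos; lra.
      * unfold tsum, q, outer3; simpl.
        match goal with |- ?L = 1 => assert (E : L = s*N + (2*t*eps - (1+eps^2)*s)) by (unfold N; ring) end.
        rewrite E, hs, ht; ring.
    + exists (v2 s 0), (v2 1 1), (v2 1 1), (v2 0 t), (v2 1 0), (v2 1 0),
             (v2 1 1), (v2 1 eps), (v2 eps 1), (v2 1 1), (v2 eps 1), (v2 1 eps).
      repeat split; try (apply v2_nn; lra).
  - intros [] [] []; unfold q, outer3; simpl; apply Rabs_def1; nra.
Qed.

Lemma m33_p : M33 p_ex.
Proof.
  split. apply delta_p.
  exists (v2 0 (1/3)), (v2 1 0), (v2 1 0),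
         (v2 (1/3) 0), (v2 0 1), (v2 1 0),
         (v2 (1/3) 0), (v2 1 0), (v2 0 1).
  repeat split; try (apply v2_nn; lra).
  intros [] [] []; unfold outer3; simpl; lra.
Qed.

Theorem mainTheorem9 :
  Delta7 p_ex /\ M33 p_ex /\ closure RBM32 p_ex /\ ~ RBM32 p_ex /\ ~ is_closed RBM32.
Proof.
  split; [apply delta_p|]. split; [apply m33_p|]. split; [apply closure_p|].
  split; [apply notRBM|].
  intros hc. apply notRBM. apply hc. apply closure_p.
Qed.
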